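(* Let $A$ be a finite set and let $(v_{xy})$ be a Llull matrix on $A$ with CLC structure, and let $\xi$ be an admissible order for it (write $x <_\xi y$ when $x$ precedes $y$ in $\xi$). Then for all $x,y,z\in A$ with $x <_\xi y$ and $z\notin\{x,y\}$: $$v_{xz}\ge v_{yz},\qquad v_{zx}\le v_{zy},\qquad t_{xz}\ge t_{yz},\qquad t_{zx}\ge t_{zy}.$$
   Context: A Llull matrix on a finite set $A$ is an assignment to each ordered pair of distinct elements $x\neq y$ of $A$ of a number $v_{xy}\in[0,1]$ such that $v_{xy}+v_{yx}\le 1$. Its turnouts are $t_{xy}=v_{xy}+v_{yx}$ and its margins are $m_{xy}=v_{xy}-v_{yx}$. The matrix has CLC structure if there is a total order $\xi$ on $A$ (called an admissible order) such that, writing $x<_\xi y$ when $x$ precedes $y$ and $x'$ for the element immediately following $x$ in $\xi$ (when it exists): (i) $v_{xy}\ge v_{yx}$ whenever $x<_\xi y$; (ii) $v_{xz}=\max(v_{xy},v_{yz})$ whenever $x<_\xi y<_\xi z$; (iii) $v_{zx}=\min(v_{zy},v_{yx})$ whenever $x<_\xi y<_\xi z$; (iv) $0\le t_{xz}-t_{x'z}\le m_{xx'}$ whenever $x$ has an immediate successor $x'$ and $z\notin\{x,x'\}$. *)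

(* Defs.v *)
From mathcomp Require Import all_boot all_order all_algebra.
Set Implicit Arguments. Unset Strict Implicit. Unset Printing Implicit Defensive.
Import Order.TTheory GRing.Theory Num.Theory.
Local Open Scope ring_scope.

(* A Llull matrix on a finite set A: values v x y for x <> y (values on the
   diagonal are irrelevant and never used). *)
Definition llull_matrix (R : realFieldType) (A : finType) (v : A -> A -> R) : Prop :=
  forall x y : A, x != y ->
    [/\ 0 <= v x y, v x y <= 1 & v x y + v y x <= 1].

Definition turnout (R : realFieldType) (A : finType) (v : A -> A -> R) (x y : A) : R :=
  v x y + v y x.
Definition margin (R : realFieldType) (A : finType) (v : A -> A -> R) (x y : A) : R :=
  v x y - v y x.

(* A total order xi on A is represented by the list of all elements of A in
   increasing order: uniq and containing every element. *)
Definition total_order_seq (A : finType) (xi : seq A) : Prop :=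
  uniq xi /\ forall a : A, a \in xi.

Definition prec (A : finType) (xi : seq A) (x y : A) : bool :=
  (index x xi < index y xi)%N.

Definition succ_of (A : finType) (xi : seq A) (x x' : A) : bool :=
  (index x' xi == (index x xi).+1)%N.

Definition admissible_order (R : realFieldType) (A : finType)
    (v : A -> A -> R) (xi : seq A) : Prop :=
  [/\ total_order_seq xi,
      (forall x y, prec xi x y -> v y x <= v x y),
      (forall x y z, prec xi x y -> prec xi y z -> v x z = Num.max (v x y) (v y z)),
      (forall x y z, prec xi x y -> prec xi y z -> v z x = Num.min (v z y) (v y x))
    &
      (forall x x' z, succ_of xi x x' -> z != x -> z != x' ->
         0 <= turnout v x z - turnout v x' z /\
         turnout v x z - turnout v x' z <= margin v x x')].

Definition has_CLC (R : realFieldType) (A : finType) (v : A -> A -> R) : Prop :=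
  exists xi : seq A, admissible_order v xi.

(* Main.v *)
Require Import Defs.
From mathcomp Require Import all_boot all_order all_algebra.
From mathcomp Require Import lra zify.
Import Order.TTheory GRing.Theory Num.Theory.
Local Open Scope ring_scope.

Section S.
Variables (R : realFieldType) (A : finType) (v : A -> A -> R) (xi : seq A) (a0 : A).
Hypothesis Hadm : admissible_order v xi.

Let n := size xi.
Let e k := nth a0 xi k.

Lemma Huq : uniq xi. Proof. by case: Hadm => [[]]. Qed.
Lemma Hall : forall a, a \in xi. Proof. by case: Hadm => [[]]. Qed.

Lemma eK k : (k < n)%N -> index (e k) xi = k.
Proof. by move=> Hk; rewrite /e index_uniq // Huq. Qed.

Lemma Ee a : e (index a xi) = a.
Proof. by rewrite /e nth_index // Hall. Qed.

Lemma idx_lt a : (index a xi < n)%N.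
Proof. by rewrite index_mem Hall. Qed.

Lemma eneq i j : (i < n)%N -> (j < n)%N -> i != j -> e i != e j.
Proof. by move=> Hi Hj; rewrite /e nth_uniq // Huq. Qed.

Lemma precE i j : (i < n)%N -> (j < n)%N -> prec xi (e i) (e j) = (i < j)%N.
Proof. by move=> Hi Hj; rewrite /prec !eK. Qed.

Lemma succE k : (k.+1 < n)%N -> succ_of xi (e k) (e k.+1).
Proof. by move=> Hk; rewrite /succ_of !eK // ltnW. Qed.

Lemma triple k : (k.+2 < n)%N ->
  [/\ v (e k.+2) (e k.+1) <= v (e k) (e k.+1),
      v (e k.+1) (e k) <= v (e k.+1) (e k.+2)
    & v (e k.+1) (e k.+2) + v (e k.+2) (e k.+1) <= v (e k) (e k.+1) + v (e k.+1) (e k)].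
Proof.
move=> Hk.
have H1 : (k.+1 < n)%N by apply: ltnW.
have H0 : (k < n)%N by apply: ltnW.
case: Hadm => _ Hi Hii Hiii Hiv.
have pab : prec xi (e k) (e k.+1) by rewrite precE.
have pbc : prec xi (e k.+1) (e k.+2) by rewrite precE.
have i1 := Hi _ _ pab. have i2 := Hi _ _ pbc.
have eac := Hii _ _ _ pab pbc. have eca := Hiii _ _ _ pab pbc.
have [] := Hiv _ _ (e k.+2) (succE k H1).
  by apply: eneq => //; lia. by apply: eneq => //; lia.
have [] := Hiv _ _ (e k) (succE k.+1 Hk).
  by apply: eneq => //; lia. by apply: eneq => //; lia.
rewrite /turnout /margin eac eca.
move: i1 i2.
set p := v (e k) (e k.+1). set q := v (e k.+1) (e k).
set r := v (e k.+1) (e k.+2). set s := v (e k.+2) (e k.+1).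
clearbody p q r s; clear Hi Hii Hiii Hiv pab pbc eac eca.
case: (leP p r); case: (leP s q); move=> ? ? ? ? ? ? ? ? ; split; lra.
Qed.

Lemma zneq z i : (i < n)%N -> i != index z xi -> z != e i.
Proof.
move=> Hi H; rewrite -{1}(Ee z); apply: eneq => //; first exact: idx_lt.
by rewrite eq_sym.
Qed.

Lemma tstep z k : (k.+1 < n)%N -> k != index z xi -> k.+1 != index z xi ->
    turnout v (e k.+1) z <= turnout v (e k) z.
Proof.
move=> Hk h1 h2.
case: Hadm => _ _ _ _ Hiv.
have Hz1 : z != e k by apply: zneq => //; lia.
have Hz2 : z != e k.+1 by apply: zneq.
have [H _] := Hiv _ _ z (succE k Hk) Hz1 Hz2.
by rewrite -subr_ge0.
Qed.

Lemma tcross m : (m.+2 < n)%N ->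
    turnout v (e m.+2) (e m.+1) <= turnout v (e m) (e m.+1).
Proof.
move=> Hm; have [_ _ H] := triple m Hm.
rewrite /turnout.
move: H; set a := v _ _; set b := v _ _; set c := v _ _; set d := v _ _.
by rewrite addrC.
Qed.

Lemma tmono z j : forall i, (i < j)%N -> (j < n)%N -> i != index z xi -> j != index z xi ->
  turnout v (e j) z <= turnout v (e i) z.
Proof.
elim/ltn_ind: j => j IH i Hij Hjn Hi Hjz.
case: j IH Hij Hjn Hjz => [//|j] IH Hij Hjn Hjz.
have Hjn' : (j < n)%N by apply: ltnW.
case: (eqVneq j i) => [Heq|Hji].
  by rewrite -Heq; apply: tstep => //; rewrite Heq.
have Hij' : (i < j)%N by rewrite ltn_neqAle eq_sym Hji -ltnS.
case: (eqVneq j (index z xi)) => [Hjz'|Hjz'].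
  case: j IH Hij Hjn Hjz Hji Hjz' Hjn' Hij' => [//|j] IH Hij Hjn Hjz Hji Hjz' Hjn' Hij'.
  have Hc : turnout v (e j.+2) z <= turnout v (e j) z.
    by rewrite -(Ee z) -Hjz'; apply: tcross.
  case: (eqVneq j i) => [Heq|Hji2]; first by rewrite -Heq.
  apply: le_trans Hc _.
  have Hij2 : (i < j)%N by rewrite ltn_neqAle eq_sym Hji2 -ltnS.
  have Hj2 : (j < n)%N by apply: ltnW; apply: ltnW.
  have Hjz2 : j != index z xi by rewrite -Hjz' neq_ltn ltnSn.
  apply: (IH j) => //.
apply: le_trans (tstep z j Hjn Hjz' Hjz) _.
by apply: IH.
Qed.

Lemma idx_neq a b : a != b -> index a xi != index b xi.
Proof.
by apply: contra => /eqP H; rewrite -(Ee a) H Ee.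
Qed.

Lemma tmonoE x y z : prec xi x y -> z != x -> z != y ->
  turnout v y z <= turnout v x z.
Proof.
move=> Hp Hzx Hzy.
have := @tmono z (index y xi) (index x xi) Hp (idx_lt y).
rewrite !Ee; apply; apply: idx_neq; by rewrite eq_sym.
Qed.

Lemma vmono x y z : prec xi x y -> z != x -> z != y ->
  v y z <= v x z /\ v z x <= v z y.
Proof.
move=> Hp Hzx Hzy.
case: Hadm => _ Hi Hii Hiii _.
have Hzx' := idx_neq z x Hzx. have Hzy' := idx_neq z y Hzy.
have Hp' := Hp; rewrite /prec in Hp'.
have Hyn := idx_lt y.
case: (ltngtP (index z xi) (index x xi)) => Hzx2; last by rewrite Hzx2 eqxx in Hzx'.
  have pzx : prec xi z x by [].
  rewrite (Hiii _ _ _ pzx Hp) (Hii _ _ _ pzx Hp).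
  by split; [rewrite ge_min lexx orbT | rewrite le_max lexx].
case: (ltngtP (index z xi) (index y xi)) => Hzy2; last by rewrite Hzy2 eqxx in Hzy'.
  have pxz : prec xi x z by [].
  have Ez := Ee z.
  move: Hzx2 Hzy2 Ez; case: (index z xi) => [//|m] Hm1 Hm2 Ez.
  rewrite -Ez.
  have Hm : (m.+2 < n)%N by apply: leq_ltn_trans Hm2 Hyn.
  have [T1 T2 _] := triple m Hm.
  have Hmn : (m < n)%N by apply: ltnW; apply: ltnW.
  have Hm1n : (m.+1 < n)%N by apply: ltnW.
  have L1 : v (e m) (e m.+1) <= v x (e m.+1).
    case: (eqVneq (index x xi) m) => [Hx|Hx]; first by rewrite -Hx Ee.
    have p1 : prec xi x (e m) by rewrite /prec eK // ltn_neqAle Hx -ltnS.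
    have p2 : prec xi (e m) (e m.+1) by rewrite precE.
    by rewrite (Hii _ _ _ p1 p2) le_max lexx orbT.
  have L2 : v y (e m.+1) <= v (e m.+2) (e m.+1).
    case: (eqVneq (index y xi) m.+2) => [Hy|Hy]; first by rewrite -Hy Ee.
    have p1 : prec xi (e m.+1) (e m.+2) by rewrite precE.
    have p2 : prec xi (e m.+2) y by rewrite /prec eK // ltn_neqAle eq_sym Hy.
    by rewrite (Hiii _ _ _ p1 p2) ge_min lexx orbT.
  have L3 : v (e m.+1) x <= v (e m.+1) (e m).
    case: (eqVneq (index x xi) m) => [Hx|Hx]; first by rewrite -Hx Ee.
    have p1 : prec xi x (e m) by rewrite /prec eK // ltn_neqAle Hx -ltnS.
    have p2 : prec xi (e m) (e m.+1) by rewrite precE.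
    by rewrite (Hiii _ _ _ p1 p2) ge_min lexx.
  have L4 : v (e m.+1) (e m.+2) <= v (e m.+1) y.
    case: (eqVneq (index y xi) m.+2) => [Hy|Hy]; first by rewrite -Hy Ee.
    have p1 : prec xi (e m.+1) (e m.+2) by rewrite precE.
    have p2 : prec xi (e m.+2) y by rewrite /prec eK // ltn_neqAle eq_sym Hy.
    by rewrite (Hii _ _ _ p1 p2) le_max lexx.
  split; [apply: le_trans L2 (le_trans T1 L1) | apply: le_trans L3 (le_trans T2 L4)].
have pyz : prec xi y z by [].
rewrite (Hii _ _ _ Hp pyz) (Hiii _ _ _ Hp pyz).
by split; [rewrite le_max lexx orbT | rewrite ge_min lexx].
Qed.

End S.

Theorem lemma3p2 (R : realFieldType) (A : finType) (v : A -> A -> R) (xi : seq A) :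
  llull_matrix v -> admissible_order v xi ->
  forall x y z : A, prec xi x y -> z != x -> z != y ->
    [/\ v y z <= v x z, v z x <= v z y,
        turnout v y z <= turnout v x z & turnout v z y <= turnout v z x].
Proof.
move=> _ Hadm x y z Hp Hzx Hzy.
have [H1 H2] := @vmono _ _ v xi x Hadm x y z Hp Hzx Hzy.
have H3 := @tmonoE _ _ v xi x Hadm x y z Hp Hzx Hzy.
split => //.
by rewrite /turnout addrC [X in _ <= X]addrC.
Qed.
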